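(* Let $\mathcal G$ be a family of nonempty subsets of the finite set $\Omega$ that is closed under unions and nonempty intersections and covers $\Omega$, and let $G\in\mathcal G$. Let $\mu_1,\dots,\mu_K$ be the distinct $\mathcal G$-atoms contained in $G$, listed in any order such that $\mu_r\subsetneq\mu_s$ implies $r<s$, and put $U_j=\bigcup_{k=1}^j\mu_k$. Then (i) $G=\bigcup_{k=1}^K\mu_k$; and (ii) for every $j=2,\dots,K$, $U_{j-1}\cap\mu_j=\bigcup\{\mu_r: r<j,\ \mu_r\subsetneq\mu_j\}$.
   Context: The $\mathcal G$-atoms are the sets $m(\omega)=\bigcap\{H\in\mathcal G:\omega\in H\}$ for $\omega\in\Omega$. *)

(* Defs.v *)
From mathcomp Require Import all_boot.
Set Implicit Arguments. Unset Strict Implicit. Unset Printing Implicit Defensive.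

Definition atom (Omega : finType) (fam : {set {set Omega}}) (w : Omega) : {set Omega} :=
  \bigcap_(H in fam | w \in H) H.

Definition is_atom (Omega : finType) (fam : {set {set Omega}}) (A : {set Omega}) : Prop :=
  exists w : Omega, A = atom fam w.

(* Main.v *)
Require Import Defs.
From mathcomp Require Import all_boot.

Section Atoms.
Variables (Omega : finType) (fam : {set {set Omega}}).
Hypothesis famI : forall A B, A \in fam -> B \in fam -> A :&: B != set0 -> A :&: B \in fam.
Hypothesis cover : \bigcup_(A in fam) A = [set: Omega].

Lemma atom_in w : w \in atom fam w.
Proof. by apply/bigcapP => H /andP[]. Qed.

Lemma atom_sub {w H} : H \in fam -> w \in H -> atom fam w \subset H.
Proof. move=> HF wH; rewrite /atom; exact: (@bigcap_inf _ _ H (fun H => (H \in fam) && (w \in H)) id (introT andP (conj HF wH))). Qed.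

Lemma atom_fam w : atom fam w \in fam.
Proof.
have : w \in \bigcup_(A in fam) A by rewrite cover in_setT.
case/bigcupP=> H0 H0F wH0.
have : (w \in atom fam w) && ((atom fam w == setT) || (atom fam w \in fam)).
  rewrite /atom; apply: (big_ind (fun X : {set Omega} => (w \in X) && ((X == setT) || (X \in fam)))).
  - by rewrite in_setT eqxx.
  - move=> X Y /andP[wX hX] /andP[wY hY]; rewrite in_setI wX wY /=.
    case/orP: hX => [/eqP->|XF]; first by rewrite setTI hY.
    case/orP: hY => [/eqP->|YF]; first by rewrite setIT XF orbT.
    rewrite famI ?orbT //; apply/set0Pn; exists w; by rewrite in_setI wX.
  - by move=> H /andP[HF wH]; rewrite wH HF orbT.
case/andP=> _ /orP[/eqP E|//].
have := atom_sub H0F wH0; rewrite E => sT.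
have HT : H0 = setT by apply/eqP; rewrite eqEsubset subsetT.
by rewrite -HT.
Qed.

Lemma atom_mono v w : w \in atom fam v -> atom fam w \subset atom fam v.
Proof. by move=> h; apply: atom_sub => //; apply: atom_fam. Qed.
End Atoms.

Lemma mem_bigcup_seq (T : finType) (s : seq {set T}) x :
  reflect (exists2 A, A \in s & x \in A) (x \in \bigcup_(A <- s) A).
Proof.
elim: s => [|a s IH]; rewrite ?big_nil ?big_cons ?in_set0.
  by constructor => -[].
rewrite in_setU; apply: (iffP orP).
  case=> [h|/IH[A As xA]]; first by exists a; rewrite ?mem_head.
  by exists A; rewrite // in_cons As orbT.
case=> A; rewrite in_cons => /orP[/eqP->|As] xA; first by left.
by right; apply/IH; exists A.
Qed.

Theorem lemma5 (Omega : finType) (fam : {set {set Omega}}) (G : {set Omega})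
  (mu : seq {set Omega}) :
  set0 \notin fam ->
  (forall A B, A \in fam -> B \in fam -> A :|: B \in fam) ->
  (forall A B, A \in fam -> B \in fam -> A :&: B != set0 -> A :&: B \in fam) ->
  \bigcup_(A in fam) A = [set: Omega] ->
  G \in fam ->
  uniq mu ->
  (forall A, A \in mu <-> (is_atom fam A /\ A \subset G)) ->
  (forall r s, r < size mu -> s < size mu ->
     nth set0 mu r \proper nth set0 mu s -> r < s) ->
  G = \bigcup_(A <- mu) A /\
  (forall j, 0 < j < size mu ->
     (\bigcup_(k < j) nth set0 mu k) :&: nth set0 mu j =
     \bigcup_(r < j | nth set0 mu r \proper nth set0 mu j) nth set0 mu r).
Proof.
move=> _ _ famI cover GF umu Hmu Hord.
have atmu w : w \in G -> atom fam w \in mu.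
  by move=> wG; apply/Hmu; split; [exists w | apply: atom_sub].
split.
  apply/setP => w; apply/idP/idP.
    by move=> wG; apply/mem_bigcup_seq; exists (atom fam w); [apply: atmu|apply: atom_in].
  case/mem_bigcup_seq => A /Hmu[_ AG] wA; exact: (subsetP AG).
move=> j /andP[j0 js].
have muj : nth set0 mu j \in mu by apply: mem_nth.
apply/setP => w; apply/idP/idP.
  case/setIP => /bigcupP[k _ wk] wj.
  have ks : k < size mu by apply: ltn_trans js.
  have muk : nth set0 mu k \in mu by apply: mem_nth.
  case/Hmu: muj => [[v Ej] jG].
  case/Hmu: muk => [[v' Ek] kG].
  have wG : w \in G by apply: (subsetP jG).
  set r := index (atom fam w) mu.
  have rs : r < size mu by rewrite index_mem atmu.
  have Er : nth set0 mu r = atom fam w by rewrite nth_index ?atmu.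
  have sub1 : atom fam w \subset nth set0 mu j by rewrite Ej; apply: (atom_mono _ _ famI cover); rewrite -Ej.
  have sub2 : atom fam w \subset nth set0 mu k by rewrite Ek; apply: (atom_mono _ _ famI cover); rewrite -Ek.
  have pr : nth set0 mu r \proper nth set0 mu j.
    rewrite Er properEneq sub1 andbT; apply/negP => /eqP E.
    have : nth set0 mu j \subset nth set0 mu k by rewrite -E.
    move=> sjk.
    case P : (nth set0 mu j \proper nth set0 mu k).
      by have := Hord _ _ js ks P; rewrite ltnNge ltnW.
    have : nth set0 mu j == nth set0 mu k by rewrite eqEproper sjk P.
    by rewrite nth_uniq // => /eqP jk; move: (ltn_ord k); rewrite -jk ltnn.
  have rj := Hord _ _ rs js pr.
  apply/bigcupP; exists (Ordinal rj) => //=; rewrite Er; exact: atom_in.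
case/bigcupP => r pr wr; rewrite in_setI; apply/andP; split.
  by apply/bigcupP; exists r.
by apply: (subsetP (proper_sub pr)).
Qed.
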